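(* Let $U=\{(x_1,x_2,x_3,y_1,y_2,y_3)\in\mathbb{R}^6 : X\neq 0,\ Y\neq 0,\ Z\neq 0\}$. For every choice of polynomials $P_1,\dots,P_8\in\mathbb{Q}[x_1,x_2,x_3,y_1,y_2,y_3]$ and every variable $\xi\in\{x_1,x_2,x_3,y_1,y_2,y_3\}$ there exist polynomials $Q_1,\dots,Q_8\in\mathbb{Q}[x_1,x_2,x_3,y_1,y_2,y_3]$ with $Q_1=0$ such that $\frac{\partial}{\partial\xi}F_{Q_1,\dots,Q_8}=F_{P_1,\dots,P_8}$ on $U$. In particular, for any multi-indices $\lambda,\mu\in\mathbb{N}_0^3$, a six-fold antiderivative of $\frac{x_1^{\lambda_1}x_2^{\lambda_2}x_3^{\lambda_3}y_1^{\mu_1}y_2^{\mu_2}y_3^{\mu_3}}{R}$ with respect to $y_1,y_2,y_3,x_1,x_2,x_3$ can be chosen of the form $F_{Q_1,\dots,Q_8}$ with rational polynomials $Q_i$ (no stand-alone polynomial term is needed).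
   Context: For $(x_1,x_2,x_3,y_1,y_2,y_3)\in\mathbb{R}^6$ set $X=x_1-y_1$, $Y=x_2-y_2$, $Z=x_3-y_3$, $R=\sqrt{X^2+Y^2+Z^2}$. For polynomials $P_1,\dots,P_8$ define on $U$ $$F_{P_1,\dots,P_8}=P_1\frac1R+P_2R+P_3\operatorname{atanh}\!\Big(\frac XR\Big)+P_4\operatorname{atanh}\!\Big(\frac YR\Big)+P_5\operatorname{atanh}\!\Big(\frac ZR\Big)+P_6\arctan\!\Big(\frac XR\frac YZ\Big)+P_7\arctan\!\Big(\frac XR\frac ZY\Big)+P_8\arctan\!\Big(\frac YR\frac ZX\Big).$$ *)

(* Defs.v *)
From Stdlib Require Import Reals.
From Coquelicot Require Import Coquelicot.
From mathcomp Require Import all_boot all_algebra.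
From mathcomp Require Import Rstruct.
From mathcomp Require Import mpoly.

Set Implicit Arguments.
Unset Strict Implicit.
Unset Printing Implicit Defensive.

Definition ix1 : 'I_6 := @Ordinal 6 0 isT.
Definition ix2 : 'I_6 := @Ordinal 6 1 isT.
Definition ix3 : 'I_6 := @Ordinal 6 2 isT.
Definition iy1 : 'I_6 := @Ordinal 6 3 isT.
Definition iy2 : 'I_6 := @Ordinal 6 4 isT.
Definition iy3 : 'I_6 := @Ordinal 6 5 isT.

Definition pt := 'I_6 -> R.

Open Scope R_scope.

Definition Xc (v : pt) : R := v ix1 - v iy1.
Definition Yc (v : pt) : R := v ix2 - v iy2.
Definition Zc (v : pt) : R := v ix3 - v iy3.
Definition Rc (v : pt) : R := sqrt (Xc v ^ 2 + Yc v ^ 2 + Zc v ^ 2).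

Definition atanh (u : R) : R := / 2 * ln ((1 + u) / (1 - u)).

Definition inU (v : pt) : Prop := Xc v <> 0 /\ Yc v <> 0 /\ Zc v <> 0.

Definition qeval (P : {mpoly rat[6]}) (v : pt) : R :=
  mpoly.meval v (mpoly.map_mpoly (ratr : rat -> R) P).

(* F_{P_1,...,P_8}; the family P_1..P_8 is indexed by 'I_8 (P_k = P (k-1)). *)
Definition Ffun (P : 'I_8 -> {mpoly rat[6]}) (v : pt) : R :=
  let X := Xc v in let Y := Yc v in let Z := Zc v in let Rr := Rc v in
    qeval (P (@Ordinal 8 0 isT)) v * / Rr
  + qeval (P (@Ordinal 8 1 isT)) v * Rr
  + qeval (P (@Ordinal 8 2 isT)) v * atanh (X / Rr)
  + qeval (P (@Ordinal 8 3 isT)) v * atanh (Y / Rr)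
  + qeval (P (@Ordinal 8 4 isT)) v * atanh (Z / Rr)
  + qeval (P (@Ordinal 8 5 isT)) v * atan (X / Rr * (Y / Z))
  + qeval (P (@Ordinal 8 6 isT)) v * atan (X / Rr * (Z / Y))
  + qeval (P (@Ordinal 8 7 isT)) v * atan (Y / Rr * (Z / X)).

Definition upd (v : pt) (i : 'I_6) (t : R) : pt :=
  fun j => if j == i then t else v j.

Definition pderiv_on_U (xi : 'I_6) (G H : pt -> R) : Prop :=
  forall v : pt, inU v -> is_derive (fun t => G (upd v xi t)) (v xi) (H v).

Definition monomR (lam mu : 'I_3 -> nat) (v : pt) : R :=
  v ix1 ^ lam (@Ordinal 3 0 isT) * v ix2 ^ lam (@Ordinal 3 1 isT)
  * v ix3 ^ lam (@Ordinal 3 2 isT)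
  * v iy1 ^ mu (@Ordinal 3 0 isT) * v iy2 ^ mu (@Ordinal 3 1 isT)
  * v iy3 ^ mu (@Ordinal 3 2 isT) / Rc v.

(* Main.v *)
Require Import Defs.
From Stdlib Require Import Reals Lra Lia.
From Coquelicot Require Import Coquelicot.
From mathcomp Require Import all_boot all_algebra.
From mathcomp Require Import Rstruct.
From mathcomp Require Import mpoly.
Open Scope R_scope.

Definition r3 (a b c : R) : R := sqrt (a ^ 2 + b ^ 2 + c ^ 2).

Lemma r3_sq a b c : r3 a b c ^ 2 = a ^ 2 + b ^ 2 + c ^ 2.
Proof. unfold r3. rewrite pow2_sqrt; [reflexivity|]. nra. Qed.

Lemma r3_pos a b c : b <> 0 -> 0 < r3 a b c.
Proof. intros Hb. unfold r3. apply sqrt_lt_R0. nra. Qed.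

Lemma is_derive_r3 a b c : b <> 0 -> is_derive (fun x => r3 x b c) a (a / r3 a b c).
Proof.
  intros Hb. unfold r3. auto_derive. nra. replace (a * (a * 1) + b * (b * 1) + c * (c * 1)) with (a^2+b^2+c^2) by ring. field.
  apply Rgt_not_eq, sqrt_lt_R0. nra.
Qed.

Lemma abs_lt_r3 a b c : b <> 0 -> - r3 a b c < a < r3 a b c.
Proof.
  intros Hb. pose proof (r3_sq a b c). pose proof (r3_pos a b c Hb). nra.
Qed.

Lemma is_derive_atanh u : -1 < u < 1 -> is_derive atanh u (/ (1 - u ^ 2)).
Proof.
  intros [H1 H2]. unfold atanh. auto_derive.
  - split; [lra|split; [|auto]]. apply Rmult_lt_0_compat; [lra|]. apply Rinv_0_lt_compat; lra.
  - field. split; [|split]; try lra. intro H. nra.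
Qed.

Lemma is_derive_atanh_comp f a df : is_derive f a df -> -1 < f a < 1 ->
  is_derive (fun x => atanh (f x)) a (df / (1 - f a ^ 2)).
Proof.
  intros Hd Hb. pose proof (is_derive_comp atanh f a _ _ (is_derive_atanh _ Hb) Hd) as H.
  unfold scal in H; simpl in H; unfold mult in H; simpl in H.
  replace (df / (1 - f a ^ 2)) with (df * / (1 - f a ^ 2)) by reflexivity. exact H.
Qed.

Lemma is_derive_atan_comp f a df : is_derive f a df ->
  is_derive (fun x => atan (f x)) a (df / (1 + f a ^ 2)).
Proof.
  intros Hd. pose proof (is_derive_comp atan f a _ _ (is_derive_atan _) Hd) as H.
  unfold scal in H; simpl in H; unfold mult in H; simpl in H.
  replace (df / (1 + f a ^ 2)) with (df * / (1 + (f a)²)). exact H.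
  unfold Rsqr, Rdiv. f_equal. f_equal. f_equal. ring.
Qed.

Lemma is_derive_eq (f : R -> R) a l l' : is_derive f a l -> l = l' -> is_derive f a l'.
Proof. intros H ->; exact H. Qed.

Ltac rsimp := unfold plus, mult, Hierarchy.one, scal, opp, zero; simpl; unfold mult; simpl.

Lemma d_ar a b c : b <> 0 ->
  is_derive (fun x => x / r3 x b c) a ((b^2 + c^2) / r3 a b c ^ 3).
Proof.
  intros Hb. pose proof (r3_pos a b c Hb) as Hp. pose proof (r3_sq a b c) as Hs.
  eapply is_derive_eq.
  { apply (is_derive_mult (fun x => x) (fun x => / r3 x b c)).
    - apply is_derive_id.
    - apply (is_derive_inv (fun x => r3 x b c)). apply is_derive_r3; auto. lra.
    - intros; apply Rmult_comm. }
  rsimp. simpl in Hs. set (r := r3 a b c) in *.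
  replace (b*(b*1)+c*(c*1)) with (r*(r*1) - a*(a*1)) by lra. field. lra.
Qed.

Lemma d_kr k a b c : b <> 0 ->
  is_derive (fun x => k / r3 x b c) a (- (a * k) / r3 a b c ^ 3).
Proof.
  intros Hb. pose proof (r3_pos a b c Hb) as Hp.
  eapply is_derive_eq.
  { apply (is_derive_scal (fun x => / r3 x b c)).
    apply (is_derive_inv (fun x => r3 x b c)). apply is_derive_r3; auto. lra. }
  change (@eq R (k * (- (a / r3 a b c) / r3 a b c ^ 2)) (- (a * k) / r3 a b c ^ 3)).
  field. lra.
Qed.

Ltac toR := match goal with |- @eq _ ?x ?y => change (@eq R x y) end.

Definition bas (m : nat) (a b c : R) : R :=
  let r := r3 a b c in
  match m with
  | 0 => / r
  | 1 => r
  | 2 => atanh (a / r)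
  | 3 => atanh (b / r)
  | 4 => atanh (c / r)
  | 5 => atan (a / r * (b / c))
  | 6 => atan (a / r * (c / b))
  | 7 => atan (b / r * (c / a))
  | _ => 0
  end.

Definition dbas (m : nat) (a b c : R) : R :=
  let r := r3 a b c in
  match m with
  | 1 => a / r
  | 2 => / r
  | 3 => - (a * b) / (r * (a ^ 2 + c ^ 2))
  | 4 => - (a * c) / (r * (a ^ 2 + b ^ 2))
  | 5 => b * c / (r * (a ^ 2 + c ^ 2))
  | 6 => b * c / (r * (a ^ 2 + b ^ 2))
  | 7 => - (b * c) / (r * (a ^ 2 + c ^ 2)) - b * c / (r * (a ^ 2 + b ^ 2))
  | _ => 0
  end.

Lemma div_bounds u r : 0 < r -> - r < u < r -> -1 < u / r < 1.
Proof.
  intros Hr [H1 H2]. assert (E : u / r * r = u) by (field; lra).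
  split; apply (Rmult_lt_reg_r r); auto; lra.
Qed.

Lemma abs_b a b c : c <> 0 -> - r3 a b c < b < r3 a b c.
Proof. intros Hc. assert (0 < r3 a b c) by (unfold r3; apply sqrt_lt_R0; nra).
  pose proof (r3_sq a b c). nra. Qed.
Lemma abs_c a b c : b <> 0 -> - r3 a b c < c < r3 a b c.
Proof. intros Hb. pose proof (r3_pos a b c Hb). pose proof (r3_sq a b c). nra. Qed.

Lemma is_derive_bas m a b c : (1 <= m <= 7)%nat -> a <> 0 -> b <> 0 -> c <> 0 ->
  is_derive (fun x => bas m x b c) a (dbas m a b c).
Proof.
  intros Hm Ha Hb Hc. pose proof (r3_pos a b c Hb) as Hp. pose proof (r3_sq a b c) as Hs.
  assert (Hr0 : r3 a b c <> 0) by lra.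
  destruct m as [|[|[|[|[|[|[|[|m]]]]]]]]; try (simpl in Hm; discriminate); unfold bas, dbas.
  - apply is_derive_r3; auto.
  - eapply is_derive_eq. apply is_derive_atanh_comp. apply d_ar; auto.
    apply div_bounds; auto. pose proof (abs_lt_r3 a b c Hb); lra.
    toR. replace (b^2+c^2) with (r3 a b c ^2 - a^2) by lra. field. split; auto.
    intro H. nra.
  - eapply is_derive_eq. apply is_derive_atanh_comp. apply d_kr; auto.
    apply div_bounds; auto. apply abs_b; auto.
    toR. replace (a^2+c^2) with (r3 a b c ^2 - b^2) by lra. field. split; auto.
    intro H. nra.
  - eapply is_derive_eq. apply is_derive_atanh_comp. apply d_kr; auto.
    apply div_bounds; auto. apply abs_c; auto.
    toR. replace (a^2+b^2) with (r3 a b c ^2 - c^2) by lra. field. split; auto.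
    intro H. nra.
  - eapply is_derive_eq. apply is_derive_atan_comp.
    eapply is_derive_ext. { intros t. toR. apply Rmult_comm. }
    apply is_derive_scal. apply d_ar; auto.
    toR. cbv beta. set (r := r3 a b c) in *.
    replace (1 + (a/r*(b/c))^2) with ((c^2*r^2 + a^2*b^2)/(c^2*r^2)) by (field; auto).
    replace (c^2 * r^2 + a^2*b^2) with ((a^2+c^2)*(b^2+c^2)) by (rewrite Hs; ring).
    field. repeat split; auto; intro H; nra.
  - eapply is_derive_eq. apply is_derive_atan_comp.
    eapply is_derive_ext. { intros t. toR. apply Rmult_comm. }
    apply is_derive_scal. apply d_ar; auto.
    toR. cbv beta. set (r := r3 a b c) in *.
    replace (1 + (a/r*(c/b))^2) with ((b^2*r^2 + a^2*c^2)/(b^2*r^2)) by (field; auto).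
    replace (b^2 * r^2 + a^2*c^2) with ((a^2+b^2)*(b^2+c^2)) by (rewrite Hs; ring).
    field. repeat split; auto; intro H; nra.
  - eapply is_derive_eq. apply is_derive_atan_comp.
    apply (is_derive_mult (fun x => b / r3 x b c) (fun x => c / x)).
    apply d_kr; auto.
    eapply is_derive_ext. { intros t. reflexivity. }
    apply (is_derive_scal (fun x => / x)). apply (is_derive_inv (fun x => x)). apply is_derive_id. auto.
    intros; apply Rmult_comm.
    rsimp. toR. simpl in Hs. set (r := r3 a b c) in *.
    assert (Hs' : r*r = a*a+b*b+c*c) by lra.
    assert (Hab : a*a+b*b <> 0) by (intro H; nra).
    assert (Hac : a*a+c*c <> 0) by (intro H; nra).
    replace (1 + b / r * (c / a) * (b / r * (c / a) * 1)) with ((r*r*(a*a) + b*b*(c*c))/(r*r*(a*a))) by (field; auto).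
    replace (r*r*(a*a) + b*b*(c*c)) with ((a*a+b*b)*(a*a+c*c)) by (rewrite Hs'; ring).
    replace (- (b * c) / (r * (a * (a * 1) + c * (c * 1))) - b * c / (r * (a * (a * 1) + b * (b * 1))))
      with (-(b*c)*(a*a + r*r)/(r*(a*a+b*b)*(a*a+c*c))).
    field. repeat split; auto.
    rewrite Hs'. field. repeat split; auto.
Qed.

From Stdlib Require Import FunctionalExtensionality.

Inductive Pol3 : (R -> R -> R -> R) -> Prop :=
| P3k (q : rat) : Pol3 (fun _ _ _ => ratr q)
| P3a : Pol3 (fun a _ _ => a)
| P3b : Pol3 (fun _ b _ => b)
| P3c : Pol3 (fun _ _ c => c)
| P3add f g : Pol3 f -> Pol3 g -> Pol3 (fun a b c => f a b c + g a b c)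
| P3mul f g : Pol3 f -> Pol3 g -> Pol3 (fun a b c => f a b c * g a b c)
| P3opp f : Pol3 f -> Pol3 (fun a b c => - f a b c).

Lemma Pol3_ext f g : Pol3 f -> (forall a b c, f a b c = g a b c) -> Pol3 g.
Proof.
  intros H E. replace g with f; auto.
  apply functional_extensionality; intro a.
  apply functional_extensionality; intro b.
  apply functional_extensionality; intro c. auto.
Qed.

Lemma ratr1 : ratr 1%R = 1 :> R. Proof. exact: GRing.rmorph1. Qed.
Lemma ratr0 : ratr 0%R = 0 :> R. Proof. exact: GRing.rmorph0. Qed.
Lemma ratr_invS n : ratr ((n.+1)%:R^-1)%R = / INR (S n).
Proof. rewrite GRing.fmorphV GRing.rmorph_nat INRE. reflexivity. Qed.

Lemma ratrN1 : ratr (-1)%R = -1 :> R.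
Proof. rewrite GRing.rmorphN GRing.rmorph1. reflexivity. Qed.

Lemma Pol3_cst1 : Pol3 (fun _ _ _ => 1).
Proof. eapply Pol3_ext. apply (P3k 1%R). intros; apply ratr1. Qed.
Lemma Pol3_cst0 : Pol3 (fun _ _ _ => 0).
Proof. eapply Pol3_ext. apply (P3k 0%R). intros; apply ratr0. Qed.
Lemma Pol3_invS n : Pol3 (fun _ _ _ => / INR (S n)).
Proof. eapply Pol3_ext. apply (P3k ((n.+1)%:R^-1)%R). intros; apply ratr_invS. Qed.

Lemma Pol3_powa p : Pol3 (fun a _ _ => a ^ p).
Proof.
  induction p as [|p IH]. apply Pol3_cst1.
  eapply Pol3_ext. apply (P3mul _ _ P3a IH). intros; simpl; reflexivity.
Qed.

Definition sum8 (f : nat -> R) : R :=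
  f 0%nat + f 1%nat + f 2%nat + f 3%nat + f 4%nat + f 5%nat + f 6%nat + f 7%nat.

Definition Phi (h : nat -> R -> R -> R -> R) (x b c : R) : R :=
  sum8 (fun m => h m x b c * bas m x b c).

Definition GoodC (f : R -> R -> R -> R) : Prop :=
  exists h : nat -> R -> R -> R -> R,
    (forall m, Pol3 (h m)) /\ (forall x b c, h 0%nat x b c = 0) /\
    (forall a b c, a <> 0 -> b <> 0 -> c <> 0 ->
       is_derive (fun x => Phi h x b c) a (f a b c)).

Lemma GoodC_ext f g : GoodC f ->
  (forall a b c, a <> 0 -> b <> 0 -> c <> 0 -> f a b c = g a b c) -> GoodC g.
Proof.
  intros [h [H1 [H2 H3]]] E. exists h; split; [|split]; auto.
  intros a b c Ha Hb Hc. eapply is_derive_eq. apply H3; auto. auto.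
Qed.

Lemma GoodC_add f g : GoodC f -> GoodC g -> GoodC (fun a b c => f a b c + g a b c).
Proof.
  intros [h [H1 [H2 H3]]] [k [K1 [K2 K3]]].
  exists (fun m a b c => h m a b c + k m a b c). split; [|split].
  - intros m. apply P3add; auto.
  - intros. rewrite H2 K2. ring.
  - intros a b c Ha Hb Hc.
    eapply is_derive_ext.
    2: { apply (is_derive_plus (fun x => Phi h x b c) (fun x => Phi k x b c)); auto. }
    intros t. rsimp. toR. unfold Phi, sum8. simpl. ring.
Qed.

Lemma GoodC_scal g f : Pol3 g -> (forall a a' b c, g a b c = g a' b c) -> GoodC f ->
  GoodC (fun a b c => g a b c * f a b c).
Proof.
  intros Pg Cg [h [H1 [H2 H3]]].
  exists (fun m a b c => g a b c * h m a b c). split; [|split].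
  - intros m. apply P3mul; auto.
  - intros. rewrite H2. ring.
  - intros a b c Ha Hb Hc.
    eapply is_derive_ext.
    2: { apply (is_derive_scal (fun x => Phi h x b c) a (g a b c)); auto. }
    intros t. rsimp. toR. unfold Phi, sum8. simpl. rewrite (Cg t a b c). ring.
Qed.

Lemma GoodC_parts m p : (1 <= m <= 7)%nat ->
  GoodC (fun a b c => INR p * a ^ (Nat.pred p) * bas m a b c + a ^ p * dbas m a b c).
Proof.
  intros Hm.
  exists (fun (j : nat) (x b c : R) => if Nat.eqb j m then x ^ p else 0). split; [|split].
  - intros j. destruct (Nat.eqb j m). apply Pol3_powa. apply Pol3_cst0.
  - intros. destruct m; [simpl in Hm; discriminate|reflexivity].
  - intros a b c Ha Hb Hc.
    eapply is_derive_ext.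
    2: { eapply is_derive_eq.
         apply (is_derive_mult (fun x => x ^ p) (fun x => bas m x b c)).
         apply (is_derive_pow (fun x => x)). apply is_derive_id.
         apply is_derive_bas; auto.
         intros; apply Rmult_comm.
         rsimp. toR. ring. }
    intros t. rsimp. toR. unfold Phi, sum8.
    destruct m as [|[|[|[|[|[|[|[|m]]]]]]]]; try (simpl in Hm; discriminate); toR; simpl; ring.
Qed.

Lemma Pol3_INR n : Pol3 (fun _ _ _ => INR n).
Proof. eapply Pol3_ext. apply (P3k (n%:R)%R). intros. rewrite GRing.rmorph_nat INRE. reflexivity. Qed.

Ltac pol3 := repeat (first [apply P3add | apply P3mul | apply P3opp | apply P3a | apply P3b | apply P3c
   | apply Pol3_cst1 | apply Pol3_invS | apply Pol3_INR]).

Ltac gscal g := apply (GoodC_scal g); [pol3 | intros; reflexivity | ].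

Ltac prep a b c Ha Hb Hc :=
  intros a b c Ha Hb Hc; pose proof (r3_sq a b c) as Hs; pose proof (r3_pos a b c Hb) as Hp;
  cbn [bas dbas pow Nat.pred]; set (r := r3 a b c) in *.

Lemma GoodC_A : forall m, GoodC (fun a b c => a ^ m * / r3 a b c) /\
                      GoodC (fun a b c => a ^ S m * / r3 a b c).
Proof.
  induction m as [|m [IH1 IH2]].
  - split.
    + eapply GoodC_ext. apply (GoodC_parts 2 0); auto.
      prep a b c Ha Hb Hc. simpl. field. lra.
    + eapply GoodC_ext. apply (GoodC_parts 1 0); auto.
      prep a b c Ha Hb Hc. simpl. field. lra.
  - split; auto.
    eapply GoodC_ext.
    { gscal (fun (_ _ _ : R) => / INR (S (S m))).
      apply GoodC_add. apply (GoodC_parts 1 (S m)); auto.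
      gscal (fun (_ b c : R) => - (INR (S m)) * (b * b + c * c)). exact IH1. }
    prep a b c Ha Hb Hc.
    replace (b * b + c * c) with (r^2 - a^2) by (simpl in *; lra).
    rewrite (S_INR (S m)). field. split. lra. pose proof (pos_INR (S m)). lra.
Qed.

Lemma GoodC_Wc : forall m,
  GoodC (fun a b c => b * c * a ^ m / (r3 a b c * (a ^ 2 + c ^ 2))) /\
  GoodC (fun a b c => b * c * a ^ S m / (r3 a b c * (a ^ 2 + c ^ 2))).
Proof.
  induction m as [|m [IH1 IH2]].
  - split.
    + eapply GoodC_ext. apply (GoodC_parts 5 0); auto.
      prep a b c Ha Hb Hc. simpl. field. split; [|lra]. intro; nra.
    + eapply GoodC_ext. { gscal (fun (_ _ c : R) => - c). apply (GoodC_parts 3 0); auto. }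
      prep a b c Ha Hb Hc. simpl. field. split; [|lra]. intro; nra.
  - split; auto.
    eapply GoodC_ext.
    { apply GoodC_add. gscal (fun (_ b c : R) => b * c). apply (proj1 (GoodC_A m)).
      gscal (fun (_ _ c : R) => - (c * c)). exact IH1. }
    prep a b c Ha Hb Hc. field. split; [|lra]. intro; nra.
Qed.

Lemma GoodC_Wb : forall m,
  GoodC (fun a b c => b * c * a ^ m / (r3 a b c * (a ^ 2 + b ^ 2))) /\
  GoodC (fun a b c => b * c * a ^ S m / (r3 a b c * (a ^ 2 + b ^ 2))).
Proof.
  induction m as [|m [IH1 IH2]].
  - split.
    + eapply GoodC_ext. apply (GoodC_parts 6 0); auto.
      prep a b c Ha Hb Hc. simpl. field. split; [|lra]. intro; nra.
    + eapply GoodC_ext. { gscal (fun (_ b _ : R) => - b). apply (GoodC_parts 4 0); auto. }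
      prep a b c Ha Hb Hc. simpl. field. split; [|lra]. intro; nra.
  - split; auto.
    eapply GoodC_ext.
    { apply GoodC_add. gscal (fun (_ b c : R) => b * c). apply (proj1 (GoodC_A m)).
      gscal (fun (_ b _ : R) => - (b * b)). exact IH1. }
    prep a b c Ha Hb Hc. field. split; [|lra]. intro; nra.
Qed.

Lemma INRS_pos n : INR (S n) <> 0.
Proof. pose proof (pos_INR n). rewrite S_INR. lra. Qed.

Lemma Core n k : (k <= 7)%nat -> GoodC (fun a b c => a ^ n * bas k a b c).
Proof.
  intros Hk.
  pose proof (INRS_pos n) as Hn.
  destruct k as [|[|[|[|[|[|[|[|k]]]]]]]]; try (simpl in Hk; discriminate).
  - eapply GoodC_ext. apply (proj1 (GoodC_A n)). prep a b c Ha Hb Hc. reflexivity.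
  - eapply GoodC_ext.
    { apply GoodC_add. apply (proj1 (GoodC_A (S (S n)))).
      gscal (fun (_ b c : R) => b * b + c * c). apply (proj1 (GoodC_A n)). }
    prep a b c Ha Hb Hc.
    replace (b * b + c * c) with (r^2 - a^2) by (simpl in *; lra). field. lra.
  - eapply GoodC_ext.
    { gscal (fun (_ _ _ : R) => / INR (S n)). apply GoodC_add. apply (GoodC_parts 2 (S n)); auto.
      gscal (fun (_ _ _ : R) => - 1). apply (proj2 (GoodC_A n)). }
    prep a b c Ha Hb Hc. field. split; auto; lra.
  - eapply GoodC_ext.
    { gscal (fun (_ _ _ : R) => / INR (S n)). apply GoodC_add. apply (GoodC_parts 3 (S n)); auto.
      apply GoodC_add. gscal (fun (_ b _ : R) => b). apply (proj1 (GoodC_A n)).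
      gscal (fun (_ _ c : R) => - c). apply (proj1 (GoodC_Wc n)). }
    prep a b c Ha Hb Hc. field. repeat split; auto; try lra. intro; nra.
  - eapply GoodC_ext.
    { gscal (fun (_ _ _ : R) => / INR (S n)). apply GoodC_add. apply (GoodC_parts 4 (S n)); auto.
      apply GoodC_add. gscal (fun (_ _ c : R) => c). apply (proj1 (GoodC_A n)).
      gscal (fun (_ b _ : R) => - b). apply (proj1 (GoodC_Wb n)). }
    prep a b c Ha Hb Hc. field. repeat split; auto; try lra. intro; nra.
  - eapply GoodC_ext.
    { gscal (fun (_ _ _ : R) => / INR (S n)). apply GoodC_add. apply (GoodC_parts 5 (S n)); auto.
      gscal (fun (_ _ _ : R) => - 1). apply (proj2 (GoodC_Wc n)). }
    prep a b c Ha Hb Hc. field. repeat split; auto; try lra. intro; nra.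
  - eapply GoodC_ext.
    { gscal (fun (_ _ _ : R) => / INR (S n)). apply GoodC_add. apply (GoodC_parts 6 (S n)); auto.
      gscal (fun (_ _ _ : R) => - 1). apply (proj2 (GoodC_Wb n)). }
    prep a b c Ha Hb Hc. field. repeat split; auto; try lra. intro; nra.
  - eapply GoodC_ext.
    { gscal (fun (_ _ _ : R) => / INR (S n)). apply GoodC_add. apply (GoodC_parts 7 (S n)); auto.
      apply GoodC_add. apply (proj2 (GoodC_Wc n)). apply (proj2 (GoodC_Wb n)). }
    prep a b c Ha Hb Hc. field. repeat split; auto; try lra; intro; nra.
Qed.
Lemma qevalD p q v : qeval (p + q)%R v = qeval p v + qeval q v.
Proof. rewrite /qeval GRing.raddfD mevalD. reflexivity. Qed.
Lemma qevalN p v : qeval (- p)%R v = - qeval p v.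
Proof. rewrite /qeval GRing.raddfN mevalN. reflexivity. Qed.
Lemma qevalM p q v : qeval (p * q)%R v = qeval p v * qeval q v.
Proof. rewrite /qeval GRing.rmorphM mevalM. reflexivity. Qed.
Lemma qevalC c v : qeval (c%:MP)%R v = ratr c.
Proof. rewrite /qeval map_mpolyC mevalC. reflexivity. Qed.
Lemma qevalX i v : qeval ('X_i)%R v = v i.
Proof. rewrite /qeval map_mpolyX mevalXU. reflexivity. Qed.
Lemma qeval0 v : qeval 0%R v = 0.
Proof. rewrite /qeval GRing.raddf0 meval0. reflexivity. Qed.
Inductive PFi : (pt -> R) -> Prop :=
| PFk (q : rat) : PFi (fun _ => ratr q)
| PFv (i : 'I_6) : PFi (fun v => v i)
| PFadd f g : PFi f -> PFi g -> PFi (fun v => f v + g v)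
| PFmul f g : PFi f -> PFi g -> PFi (fun v => f v * g v)
| PFopp f : PFi f -> PFi (fun v => - f v).

Lemma PFi_ext f g : PFi f -> (forall v, f v = g v) -> PFi g.
Proof. intros H E. replace g with f; auto. apply functional_extensionality; auto. Qed.

Lemma PFi_cst1 : PFi (fun _ => 1).
Proof. eapply PFi_ext. apply (PFk 1%R). intros; exact: GRing.rmorph1. Qed.

Lemma PFi_expr (f : pt -> R) k : PFi f -> PFi (fun v => (f v ^+ k)%R).
Proof.
  intros H. induction k as [|k IH].
  - eapply PFi_ext. apply PFi_cst1. intros; reflexivity.
  - eapply PFi_ext. apply (PFmul _ _ H IH). intros v. rewrite GRing.exprS. reflexivity.
Qed.

Lemma PFi_prod (I : Type) (r : seq I) (P : pred I) (F : I -> pt -> R) :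
  (forall i, PFi (F i)) -> PFi (fun v => (\prod_(i <- r | P i) F i v)%R).
Proof.
  intros H. induction r as [|i r IH].
  - eapply PFi_ext. apply PFi_cst1. intros; rewrite big_nil; reflexivity.
  - destruct (P i) eqn:E.
    + eapply PFi_ext. apply (PFmul _ _ (H i) IH). intros v. rewrite big_cons E. reflexivity.
    + eapply PFi_ext. apply IH. intros v. rewrite big_cons E. reflexivity.
Qed.

Lemma PFi_qeval p : PFi (qeval p).
Proof.
  induction p using mpolyind.
  - eapply PFi_ext. apply (PFk 0%R). intros v. rewrite qeval0. exact: GRing.rmorph0.
  - apply (PFi_ext (fun v => ratr c * (\prod_(i < 6) v i ^+ m i)%R + qeval p v)).
    apply PFadd; [|exact IHp].
    apply PFmul. apply (PFk c). apply (PFi_prod _ _ _ (fun i v => (v i ^+ m i)%R)).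
    intros i. apply PFi_expr. apply PFv.
    intros v. rewrite qevalD. f_equal.
    rewrite /qeval map_mpolyZ mevalZ map_mpolyX mevalX. reflexivity.
Qed.

Lemma PFi_poly f : PFi f -> exists p, forall v, f v = qeval p v.
Proof.
  induction 1 as [q|i|f g _ [p Hp] _ [q Hq]|f g _ [p Hp] _ [q Hq]|f _ [p Hp]].
  - exists (q%:MP)%R. intros v. rewrite qevalC. reflexivity.
  - exists ('X_i)%R. intros v. rewrite qevalX. reflexivity.
  - exists (p + q)%R. intros v. rewrite qevalD Hp Hq. reflexivity.
  - exists (p * q)%R. intros v. rewrite qevalM Hp Hq. reflexivity.
  - exists (- p)%R. intros v. rewrite qevalN Hp. reflexivity.
Qed.

Definition Bv (m : nat) (v : pt) : R := bas m (Xc v) (Yc v) (Zc v).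

Definition o8 (k : nat) (H : (k < 8)%nat) : 'I_8 := Ordinal H.

Lemma Ffun_exp Q v : Ffun Q v =
  qeval (Q (@Ordinal 8 0 isT)) v * Bv 0 v + qeval (Q (@Ordinal 8 1 isT)) v * Bv 1 v
  + qeval (Q (@Ordinal 8 2 isT)) v * Bv 2 v + qeval (Q (@Ordinal 8 3 isT)) v * Bv 3 v
  + qeval (Q (@Ordinal 8 4 isT)) v * Bv 4 v + qeval (Q (@Ordinal 8 5 isT)) v * Bv 5 v
  + qeval (Q (@Ordinal 8 6 isT)) v * Bv 6 v + qeval (Q (@Ordinal 8 7 isT)) v * Bv 7 v.
Proof. reflexivity. Qed.

Definition GoodV (xi : 'I_6) (f : pt -> R) : Prop :=
  exists Q : 'I_8 -> {mpoly rat[6]},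
    Q (@Ordinal 8 0 isT) = 0%R /\ pderiv_on_U xi (Ffun Q) f.

Lemma GoodV_ext xi f g : GoodV xi f -> (forall v, inU v -> f v = g v) -> GoodV xi g.
Proof.
  intros [Q [H0 HQ]] E. exists Q; split; auto.
  intros v Hv. eapply is_derive_eq. apply HQ; auto. auto.
Qed.

Lemma GoodV_add xi f g : GoodV xi f -> GoodV xi g -> GoodV xi (fun v => f v + g v).
Proof.
  intros [Q [H0 HQ]] [Q' [H0' HQ']]. exists (fun k => Q k + Q' k)%R. split.
  - rewrite H0 H0'. exact: GRing.addr0.
  - intros v Hv. eapply is_derive_ext.
    2: { apply (is_derive_plus (fun t => Ffun Q (upd v xi t)) (fun t => Ffun Q' (upd v xi t))); auto. }
    intros t. rsimp. toR. rewrite !Ffun_exp !qevalD. ring.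
Qed.

Lemma GoodV_zero xi : GoodV xi (fun _ => 0).
Proof.
  exists (fun _ => 0%R). split; auto.
  intros v Hv. apply (is_derive_ext (fun _ => 0)).
  intros t. toR. rewrite Ffun_exp !qeval0. ring.
  eapply is_derive_eq. apply is_derive_const. reflexivity.
Qed.

Definition CPF (xi : 'I_6) (c : pt -> R) : Prop :=
  PFi c /\ (forall v t, c (upd v xi t) = c v).

Lemma GoodV_scal xi c f : CPF xi c -> GoodV xi f -> GoodV xi (fun v => c v * f v).
Proof.
  intros [Pc Cc] [Q [H0 HQ]]. destruct (PFi_poly _ Pc) as [p Hp].
  exists (fun k => p * Q k)%R. split.
  - rewrite H0. exact: GRing.mulr0.
  - intros v Hv. eapply is_derive_ext.
    2: { apply (is_derive_scal (fun t => Ffun Q (upd v xi t)) (v xi) (c v)); auto. }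
    intros t. toR. rewrite !Ffun_exp !qevalM -!Hp !Cc. ring.
Qed.

Inductive Span (xi : 'I_6) (D : pt -> R) : (pt -> R) -> Prop :=
| Sp0 : Span xi D (fun _ => 0)
| SpC c j f : CPF xi c -> Span xi D f -> Span xi D (fun v => c v * D v ^ j + f v).

Lemma Span_ext xi D f g : Span xi D f -> (forall v, f v = g v) -> Span xi D g.
Proof. intros H E. replace g with f; auto. apply functional_extensionality; auto. Qed.

Lemma Span_add xi D f g : Span xi D f -> Span xi D g -> Span xi D (fun v => f v + g v).
Proof.
  intros Hf Hg. induction Hf as [|c j f Hc Hf IH].
  - eapply Span_ext. exact Hg. intros; cbv beta; ring.
  - eapply Span_ext. apply (SpC _ _ c j _ Hc IH). intros; simpl; ring.
Qed.

Lemma CPF_mul xi c d : CPF xi c -> CPF xi d -> CPF xi (fun v => c v * d v).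
Proof. intros [P1 C1] [P2 C2]. split. apply PFmul; auto. intros; rewrite C1 C2; auto. Qed.

Lemma Span_monmul xi D c j g : CPF xi c -> Span xi D g -> Span xi D (fun v => c v * D v ^ j * g v).
Proof.
  intros Hc Hg. induction Hg as [|c' l g Hc' Hg IH].
  - eapply Span_ext. apply Sp0. intros; cbv beta; ring.
  - eapply Span_ext. apply (SpC _ _ _ (Nat.add j l) _ (CPF_mul _ _ _ Hc Hc') IH).
    intros v. cbv beta. rewrite pow_add. ring.
Qed.

Lemma Span_mul xi D f g : Span xi D f -> Span xi D g -> Span xi D (fun v => f v * g v).
Proof.
  intros Hf Hg. induction Hf as [|c j f Hc Hf IH].
  - eapply Span_ext. apply Sp0. intros; cbv beta; ring.
  - eapply Span_ext. apply (Span_add _ _ _ _ (Span_monmul _ _ c j _ Hc Hg) IH).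
    intros; cbv beta; ring.
Qed.

Lemma Span_cpf xi D c : CPF xi c -> Span xi D c.
Proof. intros Hc. eapply Span_ext. apply (SpC _ _ c 0 _ Hc (Sp0 _ _)). intros; simpl; ring. Qed.

Lemma CPF_k xi q : CPF xi (fun _ => ratr q).
Proof. split. apply PFk. auto. Qed.

Lemma PFi_Span xi D (s : rat) w :
  CPF xi w -> (forall v, v xi = ratr s * D v + w v) ->
  forall f, PFi f -> Span xi D f.
Proof.
  intros Hw Hx f Hf. induction Hf as [q|i|f g _ IH1 _ IH2|f g _ IH1 _ IH2|f _ IH].
  - apply Span_cpf, CPF_k.
  - destruct (i == xi) eqn:E.
    + move/eqP: E => E. subst i.
      eapply Span_ext. apply (SpC _ _ _ 1 _ (CPF_k xi s) (Span_cpf _ _ _ Hw)).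
      intros v. rewrite Hx. simpl. ring.
    + apply Span_cpf. split. apply PFv. intros v t. unfold upd. rewrite E. reflexivity.
  - apply Span_add; auto.
  - apply Span_mul; auto.
  - eapply Span_ext. apply (Span_mul _ _ _ _ (Span_cpf _ _ _ (CPF_k xi (-1)%R)) IH).
    intros v. cbv beta. rewrite ratrN1. ring.
Qed.

Lemma GoodV_Span xi D B : (forall n, GoodV xi (fun v => D v ^ n * B v)) ->
  forall f, Span xi D f -> GoodV xi (fun v => f v * B v).
Proof.
  intros HB f Hf. induction Hf as [|c j f Hc Hf IH].
  - eapply GoodV_ext. apply GoodV_zero. intros; cbv beta; ring.
  - eapply GoodV_ext. apply (GoodV_add _ _ _ (GoodV_scal _ _ _ Hc (HB j)) IH).
    intros; cbv beta; ring.
Qed.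

Lemma GoodV_all xi D (s : rat) w :
  CPF xi w -> (forall v, v xi = ratr s * D v + w v) ->
  (forall n k, (k <= 7)%nat -> GoodV xi (fun v => D v ^ n * Bv k v)) ->
  forall P, GoodV xi (Ffun P).
Proof.
  intros Hw Hx HK P.
  assert (T : forall (k : nat) (o : 'I_8), (k <= 7)%nat ->
            GoodV xi (fun v => qeval (P o) v * Bv k v)).
  { intros k o Hk. apply (GoodV_Span xi D). intros n; apply HK; auto.
    apply (PFi_Span xi D s w Hw Hx). apply PFi_qeval. }
  eapply GoodV_ext.
  2: { intros v _. symmetry. apply Ffun_exp. }
  repeat apply GoodV_add; apply T; reflexivity.
Qed.

Lemma Pol3_PFi h D E G : Pol3 h -> PFi D -> PFi E -> PFi G ->
  PFi (fun v => h (D v) (E v) (G v)).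
Proof.
  intros Hh HD HE HG. induction Hh.
  - apply PFk.
  - exact HD.
  - exact HE.
  - exact HG.
  - apply PFadd; auto.
  - apply PFmul; auto.
  - apply PFopp; auto.
Qed.

Lemma KeyCase (xi : 'I_6) (s : rat) (D E G : pt -> R) (pi : nat -> nat) :
  ratr s * ratr s = 1 ->
  (forall v t, D (upd v xi t) = D v + ratr s * (t - v xi)) ->
  (forall v t, E (upd v xi t) = E v) -> (forall v t, G (upd v xi t) = G v) ->
  PFi D -> PFi E -> PFi G ->
  (forall v, inU v -> D v <> 0 /\ E v <> 0 /\ G v <> 0) ->
  (forall m v, (m <= 7)%nat -> Bv m v = bas (pi m) (D v) (E v) (G v)) ->
  pi 0%nat = 0%nat -> (forall m, (m <= 7)%nat -> (pi m <= 7)%nat) ->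
  (forall f : nat -> R, sum8 (fun m => f (pi m)) = sum8 f) ->
  forall n k, (k <= 7)%nat -> GoodV xi (fun v => D v ^ n * Bv k v).
Proof.
  intros Hs HD HE HG PD PE PG HU HB Hp0 Hp7 Hperm n k Hk.
  destruct (Core n (pi k) (Hp7 k Hk)) as [h [H1 [H2 H3]]].
  assert (HP : forall m, exists q, forall v, ratr s * h m (D v) (E v) (G v) = qeval q v).
  { intros m. apply PFi_poly. apply PFmul. apply PFk. apply Pol3_PFi; auto. }
  destruct (HP (pi 1%nat)) as [q1 Hq1]. destruct (HP (pi 2%nat)) as [q2 Hq2].
  destruct (HP (pi 3%nat)) as [q3 Hq3]. destruct (HP (pi 4%nat)) as [q4 Hq4].
  destruct (HP (pi 5%nat)) as [q5 Hq5]. destruct (HP (pi 6%nat)) as [q6 Hq6].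
  destruct (HP (pi 7%nat)) as [q7 Hq7].
  exists (fun o : 'I_8 => nth 0%R [:: 0%R; q1; q2; q3; q4; q5; q6; q7] o). split.
  { reflexivity. }
  assert (HF : forall w, Ffun (fun o : 'I_8 => nth 0%R [:: 0%R; q1; q2; q3; q4; q5; q6; q7] o) w
             = ratr s * Phi h (D w) (E w) (G w)).
  { intros w. rewrite Ffun_exp !HB //. cbn [nth nat_of_ord].
    rewrite qeval0 -Hq1 -Hq2 -Hq3 -Hq4 -Hq5 -Hq6 -Hq7.
    set (f := fun j => ratr s * h j (D w) (E w) (G w) * bas j (D w) (E w) (G w)).
    transitivity (sum8 (fun m => f (pi m))).
    { unfold sum8, f. rewrite Hp0 H2. ring. }
    rewrite (Hperm f). unfold sum8, f, Phi, sum8. ring. }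
  intros v Hv. destruct (HU v Hv) as [HD0 [HE0 HG0]].
  apply (is_derive_ext (fun t => ratr s * Phi h (D v + ratr s * (t - v xi)) (E v) (G v))).
  { intros t. rewrite HF HD HE HG. reflexivity. }
  eapply is_derive_eq.
  { apply is_derive_scal.
    apply (is_derive_comp (fun x => Phi h x (E v) (G v)) (fun t => D v + ratr s * (t - v xi))).
    - replace (D v + ratr s * (v xi - v xi)) with (D v) by ring. apply H3; auto.
    - auto_derive; auto. }
  rsimp. toR. rewrite HB; auto.
  transitivity ((ratr s * ratr s) * (D v ^ n * bas (pi k) (D v) (E v) (G v))).
  toR. ring. rewrite Hs. toR. ring.
Qed.

Lemma PFi_X : PFi Xc.
Proof. eapply PFi_ext. apply (PFadd _ _ (PFv ix1) (PFopp _ (PFv iy1))). intros; reflexivity. Qed.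
Lemma PFi_Y : PFi Yc.
Proof. eapply PFi_ext. apply (PFadd _ _ (PFv ix2) (PFopp _ (PFv iy2))). intros; reflexivity. Qed.
Lemma PFi_Z : PFi Zc.
Proof. eapply PFi_ext. apply (PFadd _ _ (PFv ix3) (PFopp _ (PFv iy3))). intros; reflexivity. Qed.

Lemma CPF_v xi i : i != xi -> CPF xi (fun v => v i).
Proof. intros H. split. apply PFv. intros v t. unfold upd. rewrite (negbTE H). reflexivity. Qed.

Lemma r3_yxz a b c : r3 b a c = r3 a b c.
Proof. unfold r3. f_equal. ring. Qed.
Lemma r3_zyx a b c : r3 c b a = r3 a b c.
Proof. unfold r3. f_equal. ring. Qed.

Definition pi_id (m : nat) : nat := m.
Definition pi_y (m : nat) : nat :=
  match m with 2 => 3 | 3 => 2 | 6 => 7 | 7 => 6 | _ => m end%nat.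
Definition pi_z (m : nat) : nat :=
  match m with 2 => 4 | 4 => 2 | 5 => 7 | 7 => 5 | _ => m end%nat.

Ltac upd_simp := intros v t; rewrite ?ratr1 ?ratrN1; unfold Xc, Yc, Zc, upd; simpl; ring.

Lemma GoodV_x1 P : GoodV ix1 (Ffun P).
Proof.
  apply (GoodV_all ix1 Xc 1%R (fun v => v iy1)). apply CPF_v; reflexivity.
  intros v. rewrite ratr1. unfold Xc. ring.
  apply (KeyCase ix1 1%R Xc Yc Zc pi_id).
  rewrite ratr1; ring. upd_simp. upd_simp. upd_simp.
  exact PFi_X. exact PFi_Y. exact PFi_Z.
  intros v [H1 [H2 H3]]; auto.
  intros m v _. reflexivity.
  reflexivity. intros m Hm; exact Hm. intros f. reflexivity.
Qed.
Ltac p7 := let m := fresh "m" in let Hm := fresh "Hm" in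
  intros m Hm; destruct m as [|[|[|[|[|[|[|[|m]]]]]]]]; try reflexivity; exact Hm.

Lemma GoodV_x2 P : GoodV ix2 (Ffun P).
Proof.
  apply (GoodV_all ix2 Yc 1%R (fun v => v iy2)). apply CPF_v; reflexivity.
  intros v. rewrite ratr1. unfold Yc. ring.
  apply (KeyCase ix2 1%R Yc Xc Zc pi_y).
  rewrite ratr1; ring. upd_simp. upd_simp. upd_simp.
  exact PFi_Y. exact PFi_X. exact PFi_Z.
  intros v [H1 [H2 H3]]; auto.
  intros m v Hm; destruct m as [|[|[|[|[|[|[|[|m]]]]]]]]; try (simpl in Hm; discriminate);
  unfold Bv, bas, pi_y; cbn iota zeta; try rewrite (r3_yxz (Xc v)); try reflexivity; f_equal; unfold Rdiv; ring.
  reflexivity. p7. intros f. unfold sum8, pi_y. ring.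
Qed.

Ltac hb_y := let m := fresh "m" in let v := fresh "v" in let Hm := fresh "Hm" in
  intros m v Hm; destruct m as [|[|[|[|[|[|[|[|m]]]]]]]]; try (simpl in Hm; discriminate);
  unfold Bv, bas, pi_y; cbn iota zeta; try rewrite (r3_yxz (Xc v)); try reflexivity; f_equal; unfold Rdiv; ring.
Ltac hb_z := let m := fresh "m" in let v := fresh "v" in let Hm := fresh "Hm" in
  intros m v Hm; destruct m as [|[|[|[|[|[|[|[|m]]]]]]]]; try (simpl in Hm; discriminate);
  unfold Bv, bas, pi_z; cbn iota zeta; try rewrite (r3_zyx (Xc v)); try reflexivity; f_equal; unfold Rdiv; ring.

Lemma GoodV_y1 P : GoodV iy1 (Ffun P).
Proof.
  apply (GoodV_all iy1 Xc (-1)%R (fun v => v ix1)). apply CPF_v; reflexivity.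
  intros v. rewrite ratrN1. unfold Xc. ring.
  apply (KeyCase iy1 (-1)%R Xc Yc Zc pi_id).
  rewrite ratrN1; ring. upd_simp. upd_simp. upd_simp.
  exact PFi_X. exact PFi_Y. exact PFi_Z.
  intros v [H1 [H2 H3]]; auto.
  intros m v _. reflexivity.
  reflexivity. intros m Hm; exact Hm. intros f. reflexivity.
Qed.

Lemma GoodV_y2 P : GoodV iy2 (Ffun P).
Proof.
  apply (GoodV_all iy2 Yc (-1)%R (fun v => v ix2)). apply CPF_v; reflexivity.
  intros v. rewrite ratrN1. unfold Yc. ring.
  apply (KeyCase iy2 (-1)%R Yc Xc Zc pi_y).
  rewrite ratrN1; ring. upd_simp. upd_simp. upd_simp.
  exact PFi_Y. exact PFi_X. exact PFi_Z.
  intros v [H1 [H2 H3]]; auto.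
  hb_y.
  reflexivity. p7. intros f. unfold sum8, pi_y. ring.
Qed.

Lemma GoodV_x3 P : GoodV ix3 (Ffun P).
Proof.
  apply (GoodV_all ix3 Zc 1%R (fun v => v iy3)). apply CPF_v; reflexivity.
  intros v. rewrite ratr1. unfold Zc. ring.
  apply (KeyCase ix3 1%R Zc Yc Xc pi_z).
  rewrite ratr1; ring. upd_simp. upd_simp. upd_simp.
  exact PFi_Z. exact PFi_Y. exact PFi_X.
  intros v [H1 [H2 H3]]; auto.
  hb_z.
  reflexivity. p7. intros f. unfold sum8, pi_z. ring.
Qed.

Lemma GoodV_y3 P : GoodV iy3 (Ffun P).
Proof.
  apply (GoodV_all iy3 Zc (-1)%R (fun v => v ix3)). apply CPF_v; reflexivity.
  intros v. rewrite ratrN1. unfold Zc. ring.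
  apply (KeyCase iy3 (-1)%R Zc Yc Xc pi_z).
  rewrite ratrN1; ring. upd_simp. upd_simp. upd_simp.
  exact PFi_Z. exact PFi_Y. exact PFi_X.
  intros v [H1 [H2 H3]]; auto.
  hb_z.
  reflexivity. p7. intros f. unfold sum8, pi_z. ring.
Qed.

Lemma GoodV_any xi P : GoodV xi (Ffun P).
Proof.
  destruct xi as [[|[|[|[|[|[|i]]]]]] Hi].
  - have -> : Ordinal Hi = ix1 by apply: val_inj. apply GoodV_x1.
  - have -> : Ordinal Hi = ix2 by apply: val_inj. apply GoodV_x2.
  - have -> : Ordinal Hi = ix3 by apply: val_inj. apply GoodV_x3.
  - have -> : Ordinal Hi = iy1 by apply: val_inj. apply GoodV_y1.
  - have -> : Ordinal Hi = iy2 by apply: val_inj. apply GoodV_y2.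
  - have -> : Ordinal Hi = iy3 by apply: val_inj. apply GoodV_y3.
  - discriminate Hi.
Qed.

Lemma qevalXn p n v : qeval (p ^+ n)%R v = qeval p v ^ n.
Proof.
  induction n as [|n IH].
  - rewrite GRing.expr0. rewrite /qeval GRing.rmorph1 meval1. reflexivity.
  - rewrite GRing.exprS qevalM IH. reflexivity.
Qed.

Definition mono (lam mu : 'I_3 -> nat) : {mpoly rat[6]} :=
  ('X_ix1 ^+ lam (@Ordinal 3 0 isT) * 'X_ix2 ^+ lam (@Ordinal 3 1 isT)
  * 'X_ix3 ^+ lam (@Ordinal 3 2 isT)
  * 'X_iy1 ^+ mu (@Ordinal 3 0 isT) * 'X_iy2 ^+ mu (@Ordinal 3 1 isT)
  * 'X_iy3 ^+ mu (@Ordinal 3 2 isT))%R.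


Lemma monomR_F lam mu :
  monomR lam mu = Ffun (fun o : 'I_8 => if nat_of_ord o == 0%N then mono lam mu else 0%R).
Proof.
  apply functional_extensionality; intros v.
  rewrite Ffun_exp. cbn [nat_of_ord eq_op]. simpl. rewrite !qeval0.
  rewrite /mono !qevalM !qevalXn !qevalX.
  unfold monomR, Bv, bas. cbn zeta. change (Rc v) with (r3 (Xc v) (Yc v) (Zc v)).
  unfold Rdiv. ring.
Qed.

Theorem mainTheorem5 :
  (forall (P : 'I_8 -> {mpoly rat[6]}) (xi : 'I_6),
     exists Q : 'I_8 -> {mpoly rat[6]},
       Q (@Ordinal 8 0 isT) = 0%R /\ pderiv_on_U xi (Ffun Q) (Ffun P))
  /\
  (forall lam mu : 'I_3 -> nat,
     exists (Q : 'I_8 -> {mpoly rat[6]}) (G1 G2 G3 G4 G5 : pt -> R),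
       Q (@Ordinal 8 0 isT) = 0%R /\
       pderiv_on_U iy1 G1 (monomR lam mu) /\
       pderiv_on_U iy2 G2 G1 /\
       pderiv_on_U iy3 G3 G2 /\
       pderiv_on_U ix1 G4 G3 /\
       pderiv_on_U ix2 G5 G4 /\
       pderiv_on_U ix3 (Ffun Q) G5).
Proof.
  split.
  - intros P xi. exact (GoodV_any xi P).
  - intros lam mu. rewrite monomR_F.
    destruct (GoodV_any iy1 (fun o : 'I_8 => if nat_of_ord o == 0%N then mono lam mu else 0%R)) as [Q1 [_ H1]].
    destruct (GoodV_any iy2 Q1) as [Q2 [_ H2]].
    destruct (GoodV_any iy3 Q2) as [Q3 [_ H3]].
    destruct (GoodV_any ix1 Q3) as [Q4 [_ H4]].
    destruct (GoodV_any ix2 Q4) as [Q5 [_ H5]].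
    destruct (GoodV_any ix3 Q5) as [Q6 [H06 H6]].
    exists Q6, (Ffun Q1), (Ffun Q2), (Ffun Q3), (Ffun Q4), (Ffun Q5).
    split. exact H06. split. Show. exact H1. split. exact H2. split. exact H3. split. exact H4. split. exact H5. exact H6.
Qed.
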